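(* Let $w$ be a weakly cyclically reduced word on $\{\alpha_n^{\pm1},\dots,\alpha_1^{\pm1},\beta^{\pm1}\}$ in which some letter $\alpha_i^{\pm1}$ occurs (i.e. $w\notin\langle\beta\rangle$). For every finite subset $F$ of the vertex set $X$ of the pre-graph $G_0$, there exists an extension $G$ of $G_0$ such that the cycle $C(w,v_0)$ embeds in $G$ and its image contains no vertex of $F$.
   Context: A graph consists of a vertex set $V$, an edge set $E$, a fixed-point-free involution $e\mapsto\bar e$ on $E$, and maps $i,t:E\to V$ with $i(\bar e)=t(e)$. A labeling on $S^{\pm1}$ is a map $l:E\to S^{\pm1}$ with $l(\bar e)=l(e)^{-1}$. A labeled graph is well-labeled if $i(e)=i(e')$ and $l(e)=l(e')$ imply $e=e'$. A homomorphism of labeled graphs maps vertices to vertices and edges to edges preserving $i$, $t$ and labels; an embedding is an injective homomorphism. A word $w_m\cdots w_1$ is reduced if $w_{j+1}\neq w_j^{-1}$ for all $j$, and weakly cyclically reduced if moreover $w_m\neq w_1^{-1}$ (equality $w_m=w_1$ is allowed). For such $w$, the cycle $C(w,v_0)$ is the labeled graph with $m$ distinct vertices $v_0,\dots,v_{m-1}$ and directed edges $e_1,\dots,e_m$ (with their inverses), $e_j$ going from $v_{j-1}$ to $v_j$ (indices mod $m$, so $t(e_m)=v_0$) with label $w_j$. Let $X$ be an infinite countable set and $\beta$ a permutation of $X$ acting simply transitively. The pre-graph $G_0$ has vertex set $X$ and for each $x\in X$ one directed edge from $x$ to $\beta(x)$ labeled $\beta$ (with its inverse labeled $\beta^{-1}$).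 An extension of $G_0$ is a well-labeled graph labeled on $\{\alpha_n^{\pm1},\dots,\alpha_1^{\pm1},\beta^{\pm1}\}$ containing $G_0$ and with vertex set exactly $X$. *)

(* Defs.v *)
From Stdlib Require List.
From mathcomp Require Import all_boot.
Set Implicit Arguments. Unset Strict Implicit. Unset Printing Implicit Defensive.

(* Letters of {alpha_n^{+-1},...,alpha_1^{+-1}, beta^{+-1}}:
   (None, true) = beta, (None, false) = beta^-1,
   (Some i, true) = alpha_{i+1}, (Some i, false) = alpha_{i+1}^-1. *)
Definition letter (n : nat) : Type := (option 'I_n * bool)%type.
Definition linv (n : nat) (a : letter n) : letter n := (a.1, ~~ a.2).
Definition beta_letter (n : nat) : letter n := (None, true).
Definition is_alpha_letter (n : nat) (a : letter n) : bool := a.1 != None.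

(* A word w = w_m ... w_1 is represented by the list [:: w_1; ...; w_m],
   i.e. w`_j is the letter w_{j+1}. *)
Definition reduced (n : nat) (w : seq (letter n)) : Prop :=
  forall j, j.+1 < size w ->
    nth (beta_letter n) w j.+1 <> linv (nth (beta_letter n) w j).

Definition weakly_cyclically_reduced (n : nat) (w : seq (letter n)) : Prop :=
  reduced w /\
  (0 < size w -> last (beta_letter n) w <> linv (head (beta_letter n) w)).

Record lgraph (n : nat) (V : Type) := LGraph {
  edge : Type;
  ebar : edge -> edge;
  src : edge -> V;
  tgt : edge -> V;
  lab : edge -> letter n
}.
Arguments edge {n V} l.
Arguments ebar {n V} l _.
Arguments src {n V} l _.
Arguments tgt {n V} l _.
Arguments lab {n V} l _.

Definition is_graph (n : nat) (V : Type) (G : lgraph n V) : Prop :=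
  (forall e, ebar G (ebar G e) = e) /\
  (forall e, ebar G e <> e) /\
  (forall e, src G (ebar G e) = tgt G e) /\
  (forall e, lab G (ebar G e) = linv (lab G e)).

Definition well_labeled (n : nat) (V : Type) (G : lgraph n V) : Prop :=
  forall e e', src G e = src G e' -> lab G e = lab G e' -> e = e'.

Definition homomorphism (n : nat) (V W : Type) (G : lgraph n V) (H : lgraph n W)
  (f : V -> W) (g : edge G -> edge H) : Prop :=
  forall e, src H (g e) = f (src G e) /\ tgt H (g e) = f (tgt G e) /\
            lab H (g e) = lab G e.

Arguments homomorphism {n V W} G H f g.

Definition embedding (n : nat) (V W : Type) (G : lgraph n V) (H : lgraph n W)
  (f : V -> W) (g : edge G -> edge H) : Prop :=
  homomorphism G H f g /\ injective f /\ injective g.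
Arguments embedding {n V W} G H f g.

(* The action of beta is simply transitive: the Z-action generated by the
   permutation beta is transitive and free. *)
Definition simply_transitive (X : Type) (beta : X -> X) : Prop :=
  (forall x y, exists k : nat, iter k beta x = y \/ iter k beta y = x) /\
  (forall x (k : nat), iter k.+1 beta x <> x).

(* The pre-graph G_0: edge (x, true) goes from x to beta x with label beta,
   (x, false) is its inverse. *)
Definition pregraph (n : nat) (X : Type) (beta : X -> X) : lgraph n X :=
  @LGraph n X (X * bool)%type
    (fun e => (e.1, ~~ e.2))
    (fun e => if e.2 then e.1 else beta e.1)
    (fun e => if e.2 then beta e.1 else e.1)
    (fun e => if e.2 then beta_letter n else linv (beta_letter n)).

Definition extension (n : nat) (X : Type) (beta : X -> X) (G : lgraph n X) : Prop :=
  is_graph G /\ well_labeled G /\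
  exists g : edge (pregraph n beta) -> edge G, embedding (pregraph n beta) G id g.

(* The cycle C(w, v_0): vertices 'I_m (vertex k = v_k); edge (k, true) is
   e_{k+1}, from v_k to v_{k+1 mod m} with label w_{k+1};
   (k, false) is its inverse. *)
Definition cycle_graph (n : nat) (w : seq (letter n)) : lgraph n 'I_(size w) :=
  @LGraph n 'I_(size w) ('I_(size w) * bool)%type
    (fun e => (e.1, ~~ e.2))
    (fun e => if e.2 then e.1 else ordS e.1)
    (fun e => if e.2 then ordS e.1 else e.1)
    (fun e => if e.2 then nth (beta_letter n) w e.1
              else linv (nth (beta_letter n) w e.1)).

(* Main.v *)
From Stdlib Require Import ZArith Lia Classical.
Require Import Defs.
From Stdlib Require List.
From mathcomp Require Import all_boot.
From mathcomp Require Import zify.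
Set Implicit Arguments. Unset Strict Implicit. Unset Printing Implicit Defensive.

Fixpoint ssum (f : nat -> Z) (k : nat) : Z :=
  match k with 0 => 0%Z | k'.+1 => (ssum f k' + f k')%Z end.

Lemma ssum_ext f g n : (forall i, i < n -> f i = g i) -> ssum f n = ssum g n.
Proof.
elim: n => [|n IH] H //=. rewrite IH; last by move=> i Hi; apply: H; lia.
by rewrite H.
Qed.

Lemma ssum_upd f L a n : L < n ->
  ssum (fun i => if i == L then a else f i) n = (ssum f n - f L + a)%Z.
Proof.
elim: n => [|n IH] H //=.
case: (ltnP L n) => HL.
  rewrite IH //. have -> : (n == L) = false by apply/eqP; lia. lia.
have eL : L = n by lia. subst L. rewrite eqxx.
rewrite (@ssum_ext _ f); first lia.
by move=> i Hi; have -> : (i == n) = false by apply/eqP; lia.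
Qed.

Lemma ssum_lower f j k : j <= k -> (forall i, j <= i < k -> (-1 <= f i)%Z) ->
  (- Z.of_nat (k - j) <= ssum f k - ssum f j)%Z /\
  (forall i0, j <= i0 < k -> (f i0 - Z.of_nat (k - j - 1) <= ssum f k - ssum f j)%Z).
Proof.
elim: k => [|k IH] Hjk H.
  have -> : j = 0 by lia. split; first by simpl; lia. move=> i0; lia.
case: (ltnP k j) => Hkj.
  have ej : j = k.+1 by lia. subst j. split; first lia. move=> i0; lia.
have [IH1 IH2] := IH Hkj (fun i Hi => H i ltac:(lia)).
have Hk := H k ltac:(lia).
simpl. split; first lia.
move=> i0 Hi0. case: (ltnP i0 k) => Hi.
  have := IH2 i0 ltac:(lia). lia.
have ei : i0 = k by lia. subst i0. lia.
Qed.

Lemma ssum_const f j k c : j <= k -> (forall i, j <= i < k -> f i = c) ->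
  (ssum f k - ssum f j = Z.of_nat (k - j) * c)%Z.
Proof.
elim: k => [|k IH] Hjk H.
  have -> : j = 0 by lia. simpl. lia.
case: (ltnP k j) => Hkj.
  have ej : j = k.+1 by lia. subst j. have -> : (k.+1 - k.+1)%N = 0%N by lia. lia.
have IH' := IH Hkj (fun i Hi => H i ltac:(lia)).
have Hk := H k ltac:(lia). simpl. rewrite Hk.
have -> : Z.of_nat (k.+1 - j) = (Z.of_nat (k - j) + 1)%Z by lia. lia.
Qed.

Lemma ssum_bound f n b : (forall i, i < n -> (Z.abs (f i) <= b)%Z) ->
  (Z.abs (ssum f n) <= Z.of_nat n * b)%Z.
Proof.
elim: n => [|n IH] H; first by simpl; lia.
change (ssum f n.+1) with (ssum f n + f n)%Z.
have := IH (fun i Hi => H i ltac:(lia)). have := H n ltac:(lia).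
move=> h1 h2. rewrite Nat2Z.inj_succ Z.mul_succ_l. lia.
Qed.

Definition sg n (a : letter n) : Z := if a.2 then 1%Z else (-1)%Z.
Definition step0 n (w : seq (letter n)) (M : Z) (i : nat) : Z :=
  match (nth (beta_letter n) w i).1 with None => sg (nth (beta_letter n) w i) | Some _ => M end.

Lemma linvK n (a : letter n) : linv (linv a) = a.
Proof. by case: a => ? b; rewrite /linv /= negbK. Qed.

Lemma same_beta n (a b : letter n) : a.1 = None -> b.1 = None -> b <> linv a -> b = a.
Proof.
case: a => [[?|] []]; case: b => [[?|] []] //= _ _; rewrite /linv /=; congruence.
Qed.

Lemma run n (w : seq (letter n)) j k : reduced w -> k <= size w ->
  (forall i, j <= i < k -> (nth (beta_letter n) w i).1 = None) ->
  forall i, j <= i < k -> nth (beta_letter n) w i = nth (beta_letter n) w j.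
Proof.
move=> Hr. elim: k => [|k IH] Hk H i Hi; first lia.
case: (ltnP i k) => Hik; first by apply: IH => //; try lia; move=> i' Hi'; apply: H; lia.
have ei : i = k by lia. subst i.
case: (ltnP j k) => Hjk; last by have -> : k = j by lia.
have Hprev : nth (beta_letter n) w k.-1 = nth (beta_letter n) w j.
  apply: IH; try lia; move=> i' Hi'; apply: H; lia.
rewrite -Hprev. apply: same_beta.
- apply: H; lia.
- apply: H; lia.
- have := Hr k.-1 ltac:(lia). by have -> : k.-1.+1 = k by lia.
Qed.

Lemma placement n (w : seq (letter n)) (Hw : weakly_cyclically_reduced w)
  (Halpha : has (@is_alpha_letter n) w) (B : nat) :
  exists q : nat -> nat,
  (forall j k, j < size w -> k < size w -> q j = q k -> j = k) /\
  (forall k, k < size w -> B <= q k) /\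
  (forall k : 'I_(size w), nth (beta_letter n) w k = beta_letter n -> q (ordS k) = (q k).+1) /\
  (forall k : 'I_(size w), nth (beta_letter n) w k = linv (beta_letter n) -> q k = (q (ordS k)).+1).
Proof.
case: Hw => Hr Hc.
set m := size w.
have HL : find (@is_alpha_letter n) w < m by rewrite -has_find.
set L := find (@is_alpha_letter n) w in HL.
have aL : (nth (beta_letter n) w L).1 <> None.
  have := nth_find (beta_letter n) Halpha. rewrite /is_alpha_letter -/L. by move/eqP.
set M := Z.of_nat m.
have M0 : (1 <= M)%Z by rewrite /M; lia.
set f0 := step0 w M.
set sp := (f0 L - ssum f0 m)%Z.
set f := fun i => if i == L then sp else f0 i.
have tot : ssum f m = 0%Z by rewrite /f ssum_upd //; rewrite /sp; lia.
have fL : forall i, i != L -> f i = f0 i by move=> i /negbTE Hi; rewrite /f Hi.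
have f0b : forall i, (Z.abs (f0 i) <= M)%Z.
  move=> i; rewrite /f0 /step0. case: (nth _ w i) => [[?|] b] /=; rewrite /sg; try lia.
  case: b => /=; lia.
have f0ge : forall i, (-1 <= f0 i)%Z.
  move=> i; rewrite /f0 /step0. case: (nth _ w i) => [[?|] b] /=; rewrite /sg; try lia.
  case: b => /=; lia.
have fb : forall i, (Z.abs (f i) <= M + M * M)%Z.
  move=> i. rewrite /f. case: (i == L); last by have := f0b i; nia.
  have := @ssum_bound f0 m M (fun i _ => f0b i).
  have := f0b L. rewrite /sp -/M. lia.
have fbeta : forall i, (nth (beta_letter n) w i).1 = None -> f i = sg (nth (beta_letter n) w i).
  move=> i Hi. rewrite fL; first by rewrite /f0 /step0 Hi.
  by apply/eqP=> e; subst i.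
have falpha : forall i, i != L -> (nth (beta_letter n) w i).1 <> None -> f i = M.
  move=> i Hi Ha. rewrite fL // /f0 /step0. by case: (nth _ w i) Ha => [[?|] b].
have fge : forall i, i != L -> (-1 <= f i)%Z by move=> i Hi; rewrite fL.
have sgv : forall (a : letter n), sg a = 1%Z \/ sg a = (-1)%Z by move=> a; rewrite /sg; case: a.2; lia.
set C := (Z.of_nat B + M * (M + M * M))%Z.
set P := fun j => (C + ssum f j)%Z.
have Pb : forall j, j <= m -> (Z.of_nat B <= P j)%Z.
  move=> j Hj. have := @ssum_bound f j (M + M * M) (fun i _ => fb i).
  rewrite /P /C. have : (Z.of_nat j <= M)%Z by rewrite /M; lia. nia.
have Pedge : forall k : 'I_m, P (ordS k) = (P k + f k)%Z.
  move=> k. rewrite /ordS /=. case: (ltnP k.+1 m) => Hk.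
    rewrite modn_small // /P /=; lia.
  have ek : k.+1 = m by have := ltn_ord k; lia.
  rewrite ek modnn. rewrite /P /=. have tot' : ssum f k.+1 = 0%Z by rewrite ek. simpl in tot'. lia.
have dist : forall j k, j < k -> k < m -> ssum f j <> ssum f k.
  move=> j k Hjk Hkm Heq.
  have nonz : forall (a : letter n) (x : nat), 0 < x -> (Z.of_nat x * sg a)%Z <> 0%Z.
    move=> a x Hx. case: (sgv a) => ->; lia.
  case: (classic (j <= L < k)) => HLjk.
  - have lo1 := @ssum_lower f k m ltac:(lia) (fun i Hi => fge i ltac:(apply/eqP; lia)).
    have lo2 := @ssum_lower f 0 j ltac:(lia) (fun i Hi => fge i ltac:(apply/eqP; lia)).
    simpl in lo2.
    case: (classic (exists i, k <= i < m /\ (nth (beta_letter n) w i).1 <> None)).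
      case=> i [Hi Ha]. have := lo1.2 i Hi. rewrite falpha //; last by apply/eqP; lia.
      move: lo2 => [lo2 _]. rewrite /M in M0 *. lia.
    move=> Hn1.
    case: (classic (exists i, 0 <= i < j /\ (nth (beta_letter n) w i).1 <> None)).
      case=> i [Hi Ha]. have := lo2.2 i Hi. rewrite falpha //; last by apply/eqP; lia.
      move: lo1 => [lo1 _]. rewrite /M in M0 *. lia.
    move=> Hn2.
    have b1 : forall i, k <= i < m -> (nth (beta_letter n) w i).1 = None.
      move=> i Hi. case E: (nth _ w i).1 => [x|] //. exfalso; apply: Hn1. exists i. by rewrite E.
    have b2 : forall i, 0 <= i < j -> (nth (beta_letter n) w i).1 = None.
      move=> i Hi. case E: (nth _ w i).1 => [x|] //. exfalso; apply: Hn2. exists i. by rewrite E.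
    have r1 := run Hr (leqnn m) b1.
    have D1 := @ssum_const f k m (sg (nth (beta_letter n) w k)) ltac:(lia)
                 (fun i Hi => ltac:(rewrite fbeta ?(b1 i Hi) // (r1 i Hi) //)).
    case: (posnP j) => Hj0.
      subst j. simpl in Heq. have := nonz (nth (beta_letter n) w k) (m - k) ltac:(lia). lia.
    have r2 := run Hr (ltnW (leq_ltn_trans (ltnW Hjk) Hkm)) b2.
    have D2 := @ssum_const f 0 j (sg (nth (beta_letter n) w 0)) ltac:(lia)
                 (fun i Hi => ltac:(rewrite fbeta ?(b2 i Hi) // (r2 i Hi) //)).
    have e0 : nth (beta_letter n) w 0 = nth (beta_letter n) w k.
      have el : nth (beta_letter n) w m.-1 = nth (beta_letter n) w k by apply: r1; lia.
      rewrite -el. apply: same_beta; [apply: b1; lia | apply: b2; lia |].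
      move=> H0; apply: (Hc ltac:(lia)). by rewrite -nth_last -nth0 H0 linvK.
    rewrite e0 in D2. simpl in D2.
    have := nonz (nth (beta_letter n) w k) (m - k + j) ltac:(lia).
    case: (sgv (nth (beta_letter n) w k)) => E; rewrite E in D1 D2 *; lia.
  - have free : forall i, j <= i < k -> i != L by move=> i Hi; apply/eqP=> e; subst i; apply: HLjk; lia.
    have lo := @ssum_lower f j k ltac:(lia) (fun i Hi => fge i (free i Hi)).
    case: (classic (exists i, j <= i < k /\ (nth (beta_letter n) w i).1 <> None)).
      case=> i [Hi Ha]. have := lo.2 i Hi. rewrite falpha //; last by apply: free.
      rewrite /M. lia.
    move=> Hn.
    have b1 : forall i, j <= i < k -> (nth (beta_letter n) w i).1 = None.
      move=> i Hi. case E: (nth _ w i).1 => [x|] //. exfalso; apply: Hn. exists i. by rewrite E.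
    have r1 := run Hr (ltnW Hkm) b1.
    have D1 := @ssum_const f j k (sg (nth (beta_letter n) w j)) ltac:(lia)
                 (fun i Hi => ltac:(rewrite fbeta ?(b1 i Hi) // (r1 i Hi) //)).
    have := nonz (nth (beta_letter n) w j) (k - j) ltac:(lia). lia.
exists (fun j => Z.to_nat (P j)). split; [|split; [|split]].
- move=> j k Hj Hk Hq.
  have Hj' := Pb j (ltnW Hj). have Hk' := Pb k (ltnW Hk).
  have HP : P j = P k by lia.
  rewrite /P in HP.
  case: (ltngtP j k) => // H; exfalso.
  + apply: (dist j k) => //; lia.
  + apply: (dist k j) => //; lia.
- move=> k Hk. have := Pb k (ltnW Hk). lia.
- move=> k Hk. rewrite Pedge fbeta; last by rewrite Hk.
  rewrite Hk /sg /=. have := Pb k (ltnW (ltn_ord k)). lia.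
- move=> k Hk. have := Pb (ordS k) (ltnW (ltn_ord _)). rewrite Pedge fbeta; last by rewrite Hk.
  rewrite Hk /sg /=. have := Pb k (ltnW (ltn_ord k)). lia.
Qed.

Lemma iter_inj (X : Type) (beta : X -> X) (x0 : X) :
  (forall x (k : nat), iter k.+1 beta x <> x) ->
  forall a b, iter a beta x0 = iter b beta x0 -> a = b.
Proof.
move=> Hf.
suff H : forall a b, a < b -> iter a beta x0 <> iter b beta x0.
  move=> a b E. case: (ltngtP a b) => // h; [exfalso; exact: H h E | exfalso; exact: H h (esym E)].
move=> a b Hab E. apply: (Hf (iter a beta x0) (b - a).-1).
have -> : (b - a).-1.+1 = b - a by lia.
by rewrite -iterD subnK ?E // ltnW.
Qed.

Lemma avoidB (X : Type) (beta : X -> X) (x0 : X) :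
  (forall x (k : nat), iter k.+1 beta x <> x) ->
  forall F : list X, exists B, forall y, List.In y F -> forall k, iter k beta x0 = y -> k < B.
Proof.
move=> Hf. elim=> [|y F [B HB]]; first by exists 0.
case: (classic (exists k, iter k beta x0 = y)) => [[k Hk]|Hn].
- exists (maxn B k.+1) => y' [<-|Hy'] k' Hk'.
  + have := iter_inj Hf (etrans Hk' (esym Hk)). lia.
  + have := HB y' Hy' k' Hk'. lia.
- exists B => y' [<-|Hy'] k' Hk'; last exact: HB y' Hy' k' Hk'.
  exfalso; apply: Hn; by exists k'.
Qed.

Lemma hom_inj_edges n V W (G : lgraph n V) (H : lgraph n W) f g :
  homomorphism G H f g -> injective f -> well_labeled G -> injective g.
Proof.
move=> Hh Hf Hw e e' E. apply: Hw.
- apply: Hf. rewrite -(Hh e).1 -(Hh e').1. by rewrite E.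
- rewrite -(Hh e).2.2 -(Hh e').2.2. by rewrite E.
Qed.

Lemma ordS_val m (k : 'I_m) : (val (ordS k) = if k.+1 < m then k.+1 else 0)%N.
Proof.
rewrite /ordS /=. case: ifP => H; first by rewrite modn_small.
have -> : k.+1 = m by have := ltn_ord k; lia. by rewrite modnn.
Qed.

Lemma ordS_inj m : injective (@ordS m).
Proof.
move=> a b E. apply: ord_inj. have := f_equal val E. rewrite !ordS_val.
have := ltn_ord a. have := ltn_ord b. case: ifP; case: ifP; lia.
Qed.

Lemma cyc_red n (w : seq (letter n)) (Hw : weakly_cyclically_reduced w) (k : 'I_(size w)) :
  nth (beta_letter n) w (ordS k) <> linv (nth (beta_letter n) w k).
Proof.
case: Hw => Hr Hc. rewrite ordS_val. case: ifP => H; first exact: Hr.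
have ek : k = (size w).-1 :> nat by have := ltn_ord k; lia.
move=> E. have Hs : 0 < size w by have := ltn_ord k; lia.
apply: (Hc Hs). rewrite -nth_last -nth0 -ek E linvK //.
Qed.

Lemma cycle_wl n (w : seq (letter n)) (Hw : weakly_cyclically_reduced w) :
  well_labeled (cycle_graph w).
Proof.
move=> [k b] [k' b'] /=.
case: b; case: b' => /= Es El.
- by rewrite Es.
- exfalso. subst k. exact: (cyc_red Hw El).
- exfalso. subst k'. exact: (cyc_red Hw (esym El)).
- by rewrite (ordS_inj Es).
Qed.

Definition Gedge n (w : seq (letter n)) (X : Type) :=
  ((X * bool) + ({k : 'I_(size w) | is_alpha_letter (nth (beta_letter n) w k)} * bool))%type.

Definition Gdef n (X : Type) (beta : X -> X) (w : seq (letter n)) (vert : 'I_(size w) -> X)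
  : lgraph n X :=
  @LGraph n X (Gedge w X)
    (fun e => match e with inl p => inl (p.1, ~~ p.2) | inr p => inr (p.1, ~~ p.2) end)
    (fun e => match e with
              | inl p => if p.2 then p.1 else beta p.1
              | inr p => if p.2 then vert (val p.1) else vert (ordS (val p.1)) end)
    (fun e => match e with
              | inl p => if p.2 then beta p.1 else p.1
              | inr p => if p.2 then vert (ordS (val p.1)) else vert (val p.1) end)
    (fun e => match e with
              | inl p => if p.2 then beta_letter n else linv (beta_letter n)
              | inr p => if p.2 then nth (beta_letter n) w (val p.1)
                         else linv (nth (beta_letter n) w (val p.1)) end).

Definition gcyc n (X : Type) (w : seq (letter n)) (vert : 'I_(size w) -> X)
  (e : 'I_(size w) * bool) : Gedge w X :=
  match insub e.1 with
  | Some s => inr (s, e.2)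
  | None => if (nth (beta_letter n) w e.1).2 then inl (vert e.1, e.2)
            else inl (vert (ordS e.1), ~~ e.2)
  end.

Theorem lemma9 (n : nat) (X : Type) (beta : X -> X)
  (Hbij : bijective beta) (Hst : simply_transitive beta)
  (Hcount : exists f : X -> nat, injective f)
  (Hinf : exists g : nat -> X, injective g)
  (w : seq (letter n)) (Hw : weakly_cyclically_reduced w)
  (Halpha : has (@is_alpha_letter n) w)
  (F : list X) :
  exists G : lgraph n X, extension beta G /\
    exists (f : 'I_(size w) -> X) (g : edge (cycle_graph w) -> edge G),
      embedding (cycle_graph w) G f g /\ (forall k, ~ List.In (f k) F).
Proof.
case: Hinf => g0 _. set x0 := g0 0.
have binj : injective beta := bij_inj Hbij.
have Hfree := Hst.2.
have [B HB] := avoidB x0 Hfree F.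
have [q [qinj [qB [qb qb']]]] := placement Hw Halpha B.
set vert := fun k : 'I_(size w) => iter (q k) beta x0.
have vinj : injective vert.
  move=> a b E. apply: ord_inj. apply: qinj => //. exact: iter_inj Hfree _ _ E.
have vb : forall k : 'I_(size w), nth (beta_letter n) w k = beta_letter n -> vert (ordS k) = beta (vert k).
  move=> k Hk. by rewrite /vert qb.
have vb' : forall k : 'I_(size w), nth (beta_letter n) w k = linv (beta_letter n) -> vert k = beta (vert (ordS k)).
  move=> k Hk. by rewrite /vert (qb' k Hk).
have Hhom : homomorphism (cycle_graph w) (Gdef beta vert) vert (gcyc vert).
  move=> [k b]. rewrite /gcyc /=. case: insubP => [s Hs Hv | Hn].
    by case: b => /=; rewrite Hv.
  case E: (nth _ w k) Hn => [[o|] c] //= _.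
  case: c E => E; case: b => /=.
  - by rewrite (vb k E).
  - by rewrite (vb k E).
  - by rewrite (vb' k E).
  - by rewrite (vb' k E).
exists (Gdef beta vert). split; [split; [|split]|].
- split; [|split; [|split]].
  + by case=> [[x b]|[s b]] /=; rewrite negbK.
  + by case=> [[x b]|[s b]] /=; case: b.
  + by case=> [[x b]|[s b]] /=; case: b.
  + by case=> [[x b]|[s b]] /=; case: b => //=; rewrite linvK.
- case=> [[x b]|[s b]] [[x' b'] | [s' b']] /=.
  + case: b; case: b' => //= Es _; by [rewrite Es | rewrite (binj _ _ Es)].
  + move=> _ El. have El1 := f_equal fst El. move: (valP s'). rewrite /is_alpha_letter.
    by case: b El El1; case: b' => /= _ <-.
  + move=> _ El. have El1 := f_equal fst El. move: (valP s). rewrite /is_alpha_letter.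
    by case: b El El1; case: b' => /= _ ->.
  + case: b; case: b' => /= Es El.
    * by rewrite (val_inj (vinj _ _ Es)).
    * exfalso. have e := vinj _ _ Es. apply: (cyc_red Hw (k := val s')). by rewrite -e.
    * exfalso. have e := vinj _ _ Es. apply: (cyc_red Hw (k := val s)). by rewrite e -El.
    * by rewrite (val_inj (ordS_inj (vinj _ _ Es))).
- exists inl. split; first by move=> [x b].
  split; first by []. by move=> a b [].
- exists vert, (gcyc vert). split; first split.
  + exact: Hhom.
  + split; first exact: vinj. exact: (hom_inj_edges Hhom vinj (cycle_wl Hw)).
  + move=> k Hk. have := HB _ Hk (q k) erefl. have := qB k (ltn_ord k). lia.
Qed.
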